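(* For real $u,w$ and an integer $n\ge1$ let $g_n(u,w):=\sum_{i=1}^n i\,w^{i-1}u^{n-i}$. For every natural number $m\ge 1$: (i) $$g_{4m+2}(w,u)-g_{4m+2}(u,w)=\sum_{i=0}^{2m}(4m+1-2i)(uw)^i\left(u^{4m+1-2i}-w^{4m+1-2i}\right)$$ $$=(u+w)\sum_{i=0}^{m-1}(4m-1-4i)\left(u^{4m-4i}-w^{4m-4i}\right)(uw)^{2i}+2\sum_{i=0}^{m-1}\left(u^{4m+1-4i}-w^{4m+1-4i}\right)(uw)^{2i}+(uw)^{2m}(u-w);$$ (ii) $$g_{4m}(w,u)-g_{4m}(u,w)=\sum_{i=0}^{2m-1}(4m-1-2i)(uw)^i\left(u^{4m-1-2i}-w^{4m-1-2i}\right)$$ $$=(u+w)\sum_{i=0}^{m-1}(4m-3-4i)\left(u^{4m-2-4i}-w^{4m-2-4i}\right)(uw)^{2i}+2\sum_{i=0}^{m-1}\left(u^{4m-1-4i}-w^{4m-1-4i}\right)(uw)^{2i}.$$ Furthermore, let $\beta>0$, $k>0$, and $w=\delta(u)$ with $\delta$ the involution defined in the context. Then $g_n(w,u)>g_n(u,w)$ for all even positive integers $n$, both when $-k<u_0<0$ (for $u\in(0,u_1)$) and when $u_0<-k$ (for $u\in(0,k)$).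
   Context: $\Phi(u)=\beta\left(-\frac{u^4}{4}+\frac{k+u_0}{3}u^3-\frac{ku_0}{2}u^2\right)$. Case $-k<u_0<0$: $u_1$ is the unique point of $(0,k)$ with $\Phi(u_1)=\Phi(u_0)$, and for $u\in(0,u_1)$, $\delta(u)$ is the unique $w\in(u_0,0)$ with $\Phi(w)=\Phi(u)$. Case $u_0<-k$: $w_2$ is the unique point of $(u_0,0)$ with $\Phi(w_2)=\Phi(k)$, and for $u\in(0,k)$, $\delta(u)$ is the unique $w\in(w_2,0)$ with $\Phi(w)=\Phi(u)$. *)

(* Defs.v *)
From HB Require Import structures.
From mathcomp Require Import all_boot all_order all_algebra.
From mathcomp Require Import reals.
Set Implicit Arguments. Unset Strict Implicit. Unset Printing Implicit Defensive.
Import Order.TTheory GRing.Theory Num.Theory.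
Local Open Scope ring_scope.

Definition g {R : realType} (n : nat) (u w : R) : R :=
  \sum_(1 <= i < n.+1) i%:R * w ^+ (i - 1) * u ^+ (n - i).

Definition Phi {R : realType} (beta k u0 : R) (u : R) : R :=
  beta * (- u ^+ 4 / 4%:R + (k + u0) / 3%:R * u ^+ 3 - k * u0 / 2%:R * u ^+ 2).

(* Main.v *)
Require Import Defs.
From HB Require Import structures.
From mathcomp Require Import all_boot all_order all_algebra.
From mathcomp Require Import reals.
From mathcomp Require Import zify ring lra.
Import Order.TTheory GRing.Theory Num.Theory.
Local Open Scope ring_scope.

Section Aux.
Variables (R : realType) (u w : R).

Definition S (p : nat) := \sum_(0 <= i < p) (2 * p - 1 - 2 * i)%:R * (u * w) ^+ i * (u ^+ (2 * p - 1 - 2 * i) - w ^+ (2 * p - 1 - 2 * i)).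

Lemma S0 : S 0 = 0. Proof. by rewrite /S big_geq. Qed.

Lemma Srec p : S p.+1 = ((2 * p).+1)%:R  *  (u^+(2 * p).+1 - w^+(2 * p).+1) + u * w  *  S p.
Proof.
rewrite /S big_nat_recl // muln0 subn0 expr0 mulr1.
have -> : (2 * p.+1 - 1 = (2 * p).+1)%N by lia.
congr (_ + _); rewrite mulr_sumr; apply eq_big_nat => i /andP[_ hi].
have -> : ((2 * p).+1 - 2 * i.+1 = 2 * p - 1 - 2 * i)%N by lia.
rewrite exprS; ring.
Qed.

Lemma S2rec p : S p.+2 = (u * w)^+2  *  S p + (((2 * p).+3)%:R  *  (u^+(2 * p).+3 - w^+(2 * p).+3)
   + u * w * (((2 * p).+1)%:R  *  (u^+(2 * p).+1 - w^+(2 * p).+1))).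
Proof.
rewrite !Srec. have -> : (2 * p.+1 = (2 * p).+2)%N by lia. ring.
Qed.

Lemma key N : (u+w) * (u^+N.+1 - w^+N.+1) = u^+N.+2 - w^+N.+2 + u * w * (u^+N - w^+N).
Proof. rewrite !exprS; ring. Qed.

Hypothesis hu : 0 < u.
Hypothesis hw : w < 0.

Lemma evenpos k : 0 <= (u+w) * (u^+(2 * k) - w^+(2 * k)).
Proof.
move: hu hw => hu1 hw1.
rewrite !exprM subrXX mulrA; apply: mulr_ge0.
  have h : 0 <= (u + w) ^+ 2 * (u - w) by apply: mulr_ge0; [exact: sqr_ge0 | lra].
  have -> : (u + w) * (u ^+ 2 - w ^+ 2) = (u + w) ^+ 2 * (u - w) by ring.
  exact: h.
apply: sumr_ge0 => i _; apply: mulr_ge0; apply: exprn_ge0; exact: sqr_ge0.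
Qed.

Lemma oddpos k : 0 < u^+(2 * k).+1 - w^+(2 * k).+1.
Proof.
move: hu hw => hu1 hw1.
have h1 : 0 < u^+(2 * k).+1 by apply: exprn_gt0.
have h2 : 0 < (w^+2)^+k by apply: exprn_gt0; rewrite expr2 nmulr_rgt0.
have h3 : w * (w^+2)^+k < 0 by rewrite nmulr_rlt0.
rewrite [w ^+ _.+1]exprS [w ^+ (2 * k)]exprM. lra.
Qed.

Lemma Bpos p : 0 < ((2 * p).+3)%:R  *  (u^+(2 * p).+3 - w^+(2 * p).+3)
   + u * w * (((2 * p).+1)%:R  *  (u^+(2 * p).+1 - w^+(2 * p).+1)).
Proof.
move: hu hw => hu1 hw1.
have -> : ((2 * p).+3)%:R  *  (u^+(2 * p).+3 - w^+(2 * p).+3)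
   + u * w * (((2 * p).+1)%:R  *  (u^+(2 * p).+1 - w^+(2 * p).+1)) =
   ((2 * p).+1)%:R  *  ((u+w) * (u^+(2 * p).+2 - w^+(2 * p).+2)) + 2%:R  *  (u^+(2 * p).+3 - w^+(2 * p).+3).
  rewrite key. rewrite !mulrS. ring.
have h1 : 0 <= ((2 * p).+1)%:R  *  ((u+w) * (u^+(2 * p).+2 - w^+(2 * p).+2)).
  apply: mulr_ge0 => //. have -> : ((2 * p).+2 = 2  *  p.+1)%N by lia. exact: evenpos.
have h2 : 0 < u^+(2 * p).+3 - w^+(2 * p).+3.
  have -> : ((2 * p).+3 = (2  *  p.+1).+1)%N by lia. exact: oddpos.
apply: ltr_wpDl h1 _. apply: mulr_gt0 => //.
Qed.

Lemma Spos p : 0 < S p.+1.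
Proof.
move: hu hw => hu1 hw1.
suff: 0 < S p.+1 /\ 0 < S p.+2 by case.
elim: p => [|p [IH1 IH2]].
  split.
    rewrite Srec S0 mulr0 addr0 muln0 !expr1 mulr1n; lra.
  rewrite S2rec S0 mulr0 add0r. exact: (Bpos 0).
split => //.
rewrite S2rec. have := Bpos p.+1.
have : 0 <= (u * w)^+2  *  S p.+1 by apply: mulr_ge0 => //; [exact: sqr_ge0 | lra].
lra.
Qed.
End Aux.

Section Aux2.
Variables (R : realType).
Lemma gE n (a b : R) : g n a b = \sum_(0 <= i < n) (i.+1)%:R * b ^+ i * a ^+ (n - i.+1).
Proof. rewrite /g big_add1 /=. apply: eq_big_nat => i _. by rewrite subSS subn0. Qed.

Lemma Adiff n (u w : R) : g n w u - g n u w =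
  \sum_(0 <= i < n) ((n - i)%:R - (i.+1)%:R) * w ^+ i * u ^+ (n - i.+1).
Proof.
rewrite !gE [in X in X - _]big_nat_rev /= -sumrB.
apply: eq_big_nat => i /andP[_ hi]. rewrite add0n.
have e2 : (n - (n - i.+1).+1 = i)%N by lia.
have e1 : ((n - i.+1).+1 = n - i)%N by lia.
rewrite e2 e1. ring.
Qed.

Lemma Spair p (u w : R) : \sum_(0 <= i < 2 * p) ((2 * p - i)%:R - (i.+1)%:R) * w ^+ i * u ^+ (2 * p - i.+1) = @S R u w p.
Proof.
rewrite (@big_cat_nat _ _ _ p) /=; [|lia|lia].
rewrite (big_addn 0 (2 * p) p).
rewrite (_ : (2 * p - p = p)%N); last by lia.
rewrite [X in _ + X]big_nat_rev /= -big_split /=. apply: eq_big_nat => i /andP[_ hi].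
rewrite add0n.
have e3 : (2 * p - (p - i.+1 + p).+1 = i)%N by lia.
have e1 : (2 * p - (p - i.+1 + p) = i.+1)%N by lia.
have e2 : ((p - i.+1 + p).+1 = 2 * p - i)%N by lia.
have e4 : (p - i.+1 + p = i + (2 * p - 1 - 2 * i))%N by lia.
have e5 : (2 * p - i.+1 = i + (2 * p - 1 - 2 * i))%N by lia.
rewrite e3 e1 e2 e4 e5.
have ec : ((2 * p - i)%:R - (i.+1)%:R : R) = (2 * p - 1 - 2 * i)%:R.
  by rewrite -natrB; [congr (_ %:R); lia | lia].
have ec' : ((i.+1)%:R - (2 * p - i)%:R : R) = - (2 * p - 1 - 2 * i)%:R.
  by rewrite -ec opprB.
rewrite ec ec' !exprD exprMn. ring.
Qed.

Lemma R2E m (u w : R) : (u + w) * \sum_(0 <= i < m)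
           (4 * m - 3 - 4 * i)%:R * (u ^+ (4 * m - 2 - 4 * i) - w ^+ (4 * m - 2 - 4 * i))
             * (u * w) ^+ (2 * i)
       + 2%:R * \sum_(0 <= i < m)
           (u ^+ (4 * m - 1 - 4 * i) - w ^+ (4 * m - 1 - 4 * i)) * (u * w) ^+ (2 * i)
   = @S R u w (2 * m).
Proof.
elim: m => [|m IH].
  rewrite !big_geq // muln0 S0.  ring.
rewrite !big_nat_recl //.
have EA : \sum_(0 <= i < m) (4 * m.+1 - 3 - 4 * i.+1)%:R * (u ^+ (4 * m.+1 - 2 - 4 * i.+1) - w ^+ (4 * m.+1 - 2 - 4 * i.+1)) * (u * w) ^+ (2 * i.+1)
  = (u * w) ^+ 2 * \sum_(0 <= i < m) (4 * m - 3 - 4 * i)%:R * (u ^+ (4 * m - 2 - 4 * i) - w ^+ (4 * m - 2 - 4 * i)) * (u * w) ^+ (2 * i).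
  rewrite mulr_sumr; apply: eq_big_nat => i /andP[_ hi].
  have -> : (4 * m.+1 - 3 - 4 * i.+1 = 4 * m - 3 - 4 * i)%N by lia.
  have -> : (4 * m.+1 - 2 - 4 * i.+1 = 4 * m - 2 - 4 * i)%N by lia.
  have -> : (2 * i.+1 = 2 + 2 * i)%N by lia.
  rewrite exprD; ring.
have EB : \sum_(0 <= i < m) (u ^+ (4 * m.+1 - 1 - 4 * i.+1) - w ^+ (4 * m.+1 - 1 - 4 * i.+1)) * (u * w) ^+ (2 * i.+1)
  = (u * w) ^+ 2 * \sum_(0 <= i < m) (u ^+ (4 * m - 1 - 4 * i) - w ^+ (4 * m - 1 - 4 * i)) * (u * w) ^+ (2 * i).
  rewrite mulr_sumr; apply: eq_big_nat => i /andP[_ hi].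
  have -> : (4 * m.+1 - 1 - 4 * i.+1 = 4 * m - 1 - 4 * i)%N by lia.
  have -> : (2 * i.+1 = 2 + 2 * i)%N by lia.
  rewrite exprD; ring.
rewrite EA EB.
have -> : (2 * m.+1 = (2 * m).+2)%N by lia.
rewrite S2rec -IH.
have -> : (4 * m.+1 - 3 - 4 * 0 = (4 * m).+1)%N by lia.
have -> : (4 * m.+1 - 2 - 4 * 0 = (4 * m).+2)%N by lia.
have -> : (4 * m.+1 - 1 - 4 * 0 = (4 * m).+3)%N by lia.
have -> : (2 * (2 * m) = 4 * m)%N by lia.
rewrite muln0 expr0 !mulr1 !exprS !mulrS. ring.
Qed.

Lemma R1E m (u w : R) : (u + w) * \sum_(0 <= i < m)
           (4 * m - 1 - 4 * i)%:R * (u ^+ (4 * m - 4 * i) - w ^+ (4 * m - 4 * i))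
             * (u * w) ^+ (2 * i)
       + 2%:R * \sum_(0 <= i < m)
           (u ^+ (4 * m + 1 - 4 * i) - w ^+ (4 * m + 1 - 4 * i)) * (u * w) ^+ (2 * i)
       + (u * w) ^+ (2 * m) * (u - w)
   = @S R u w (2 * m).+1.
Proof.
elim: m => [|m IH].
  rewrite !big_geq // muln0 Srec S0 muln0 expr0 !expr1.  ring.
rewrite !big_nat_recl //.
have EA : \sum_(0 <= i < m) (4 * m.+1 - 1 - 4 * i.+1)%:R * (u ^+ (4 * m.+1 - 4 * i.+1) - w ^+ (4 * m.+1 - 4 * i.+1)) * (u * w) ^+ (2 * i.+1)
  = (u * w) ^+ 2 * \sum_(0 <= i < m) (4 * m - 1 - 4 * i)%:R * (u ^+ (4 * m - 4 * i) - w ^+ (4 * m - 4 * i)) * (u * w) ^+ (2 * i).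
  rewrite mulr_sumr; apply: eq_big_nat => i /andP[_ hi].
  have -> : (4 * m.+1 - 1 - 4 * i.+1 = 4 * m - 1 - 4 * i)%N by lia.
  have -> : (4 * m.+1 - 4 * i.+1 = 4 * m - 4 * i)%N by lia.
  have -> : (2 * i.+1 = 2 + 2 * i)%N by lia.
  rewrite exprD; ring.
have EB : \sum_(0 <= i < m) (u ^+ (4 * m.+1 + 1 - 4 * i.+1) - w ^+ (4 * m.+1 + 1 - 4 * i.+1)) * (u * w) ^+ (2 * i.+1)
  = (u * w) ^+ 2 * \sum_(0 <= i < m) (u ^+ (4 * m + 1 - 4 * i) - w ^+ (4 * m + 1 - 4 * i)) * (u * w) ^+ (2 * i).
  rewrite mulr_sumr; apply: eq_big_nat => i /andP[_ hi].
  have -> : (4 * m.+1 + 1 - 4 * i.+1 = 4 * m + 1 - 4 * i)%N by lia.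
  have -> : (2 * i.+1 = 2 + 2 * i)%N by lia.
  rewrite exprD; ring.
rewrite EA EB.
have -> : ((2 * m.+1).+1 = ((2 * m).+1).+2)%N by lia.
rewrite S2rec -IH.
have -> : (4 * m.+1 - 1 - 4 * 0 = (4 * m).+3)%N by lia.
have -> : (4 * m.+1 - 4 * 0 = (4 * m).+4)%N by lia.
have -> : (4 * m.+1 + 1 - 4 * 0 = (4 * m).+4.+1)%N by lia.
have -> : (2 * (2 * m).+1 = (4 * m).+2)%N by lia.
have -> : (2 * m.+1 = 2 + 2 * m)%N by lia.
rewrite muln0 expr0 !mulr1 exprD !exprS !mulrS. ring.
Qed.
End Aux2.


Lemma main_ineq (R : realType) (u w : R) n : 0 < u -> w < 0 -> (0 < n)%N -> ~~ odd n -> g n u w < g n w u.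
Proof.
move=> hu hw hn hev. rewrite -subr_gt0 Adiff.
have hn2 : n = (2 * n./2)%N.
  by move: (odd_double_half n); rewrite (negbTE hev) add0n -mul2n.
move: hn2 hn; case: (n./2) => [|q] -> hn; first by [].
rewrite Spair. by apply: Spos.
Qed.

Theorem lemma3p7 (R : realType) :
  (* (i) *)
  (forall (m : nat) (u w : R), (1 <= m)%N ->
     g (4 * m + 2) w u - g (4 * m + 2) u w
     = \sum_(0 <= i < (2 * m).+1)
         (4 * m + 1 - 2 * i)%:R * (u * w) ^+ i
           * (u ^+ (4 * m + 1 - 2 * i) - w ^+ (4 * m + 1 - 2 * i))
   /\ \sum_(0 <= i < (2 * m).+1)
         (4 * m + 1 - 2 * i)%:R * (u * w) ^+ i
           * (u ^+ (4 * m + 1 - 2 * i) - w ^+ (4 * m + 1 - 2 * i))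
     = (u + w) * \sum_(0 <= i < m)
           (4 * m - 1 - 4 * i)%:R * (u ^+ (4 * m - 4 * i) - w ^+ (4 * m - 4 * i))
             * (u * w) ^+ (2 * i)
       + 2%:R * \sum_(0 <= i < m)
           (u ^+ (4 * m + 1 - 4 * i) - w ^+ (4 * m + 1 - 4 * i)) * (u * w) ^+ (2 * i)
       + (u * w) ^+ (2 * m) * (u - w)) /\
  (* (ii) *)
  (forall (m : nat) (u w : R), (1 <= m)%N ->
     g (4 * m) w u - g (4 * m) u w
     = \sum_(0 <= i < 2 * m)
         (4 * m - 1 - 2 * i)%:R * (u * w) ^+ i
           * (u ^+ (4 * m - 1 - 2 * i) - w ^+ (4 * m - 1 - 2 * i))
   /\ \sum_(0 <= i < 2 * m)
         (4 * m - 1 - 2 * i)%:R * (u * w) ^+ i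
           * (u ^+ (4 * m - 1 - 2 * i) - w ^+ (4 * m - 1 - 2 * i))
     = (u + w) * \sum_(0 <= i < m)
           (4 * m - 3 - 4 * i)%:R * (u ^+ (4 * m - 2 - 4 * i) - w ^+ (4 * m - 2 - 4 * i))
             * (u * w) ^+ (2 * i)
       + 2%:R * \sum_(0 <= i < m)
           (u ^+ (4 * m - 1 - 4 * i) - w ^+ (4 * m - 1 - 4 * i)) * (u * w) ^+ (2 * i)) /\
  (* inequality g_n(w,u) > g_n(u,w), n even positive, w = delta(u) *)
  (forall beta k : R, 0 < beta -> 0 < k ->
     (* case -k < u0 < 0 *)
     (forall u0 u1 : R, - k < u0 < 0 ->
        0 < u1 < k -> Phi beta k u0 u1 = Phi beta k u0 u0 ->
        forall u w : R, 0 < u < u1 ->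
          u0 < w < 0 -> Phi beta k u0 w = Phi beta k u0 u ->
          forall n : nat, (0 < n)%N -> ~~ odd n ->
            g n u w < g n w u) /\
     (* case u0 < -k *)
     (forall u0 w2 : R, u0 < - k ->
        u0 < w2 < 0 -> Phi beta k u0 w2 = Phi beta k u0 k ->
        forall u w : R, 0 < u < k ->
          w2 < w < 0 -> Phi beta k u0 w = Phi beta k u0 u ->
          forall n : nat, (0 < n)%N -> ~~ odd n ->
            g n u w < g n w u)).
Proof.
split; [|split].
- move=> m u w hm.
  have E1 : g (4 * m + 2) w u - g (4 * m + 2) u w = @S R u w (2 * m).+1.
    by rewrite Adiff (_ : (4 * m + 2 = 2 * (2 * m).+1)%N) ?Spair //; lia.
  split.
    rewrite E1 /S. apply: eq_big_nat => i /andP[_ hi].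
    by have -> : (2 * (2 * m).+1 - 1 - 2 * i = 4 * m + 1 - 2 * i)%N by lia.
  rewrite R1E /S. apply: eq_big_nat => i /andP[_ hi].
  by have -> : (2 * (2 * m).+1 - 1 - 2 * i = 4 * m + 1 - 2 * i)%N by lia.
- move=> m u w hm.
  have E1 : g (4 * m) w u - g (4 * m) u w = @S R u w (2 * m).
    by rewrite Adiff (_ : (4 * m = 2 * (2 * m))%N) ?Spair //; lia.
  split.
    rewrite E1 /S. apply: eq_big_nat => i /andP[_ hi].
    by have -> : (2 * (2 * m) - 1 - 2 * i = 4 * m - 1 - 2 * i)%N by lia.
  rewrite R2E /S. apply: eq_big_nat => i /andP[_ hi].
  by have -> : (2 * (2 * m) - 1 - 2 * i = 4 * m - 1 - 2 * i)%N by lia.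
- move=> beta k hb hk; split.
    move=> u0 u1 _ _ _ u w /andP[hu _] /andP[_ hw] _ n hn hev.
    exact: main_ineq.
  move=> u0 w2 _ _ _ u w /andP[hu _] /andP[_ hw] _ n hn hev.
  exact: main_ineq.
Qed.
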